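(* Let $d\ge2$, $\nu=e^{2\pi i/d}$, and $0<r\le1$. Let $p\in\mathcal P_d$, $p(z)=\sum_{j=0}^{d-1}c_jz^j$, and suppose there exists $z_0$ with $|z_0|=1$ such that $|\nu^jz_0-w|\ge r$ for every $j\in\{1,\dots,d\}$ and every root $w$ of every nonzero truncation of $p$. Then for all $j\in\{1,\dots,d\}$, $$|p(\nu^jz_0)|\ge\frac{r^{\frac{(d-1)d}{2}}\left(\frac{d-1}{2d}\right)^d\frac{2}{d-1}}{\prod_{k=0}^{d-1}(r^k+1)}\,\|\hat p\|_1,$$ where $\|\hat p\|_1=\sum_{j=0}^{d-1}|c_j|$.
   Context: $\mathcal P_d$ is the space of complex polynomials of degree at most $d-1$. For $p(z)=\sum_{j=0}^{d-1}c_jz^j$ and $n\in\{1,\dots,d\}$, the $n$-th truncation of $p$ is $p_n(z)=\sum_{j=0}^{n-1}c_jz^j$. *)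

(* Defs.v *)
From HB Require Import structures.
From mathcomp Require Import all_boot all_order all_algebra.
From mathcomp Require Import complex.
From mathcomp Require Import all_classical all_reals.
From mathcomp Require Import trigo.
Set Implicit Arguments. Unset Strict Implicit. Unset Printing Implicit Defensive.
Import Order.TTheory GRing.Theory Num.Theory.
Local Open Scope ring_scope.
Local Open Scope complex_scope.

Definition nu (R : realType) (d : nat) : R[i] :=
  cos (2 * pi / d%:R) +i* sin (2 * pi / d%:R).

Definition trunc_poly (R : realType) (n : nat) (p : {poly R[i]}) : {poly R[i]} :=
  \poly_(j < n) p`_j.

Definition l1coef (R : realType) (d : nat) (p : {poly R[i]}) : R :=
  \sum_(j < d) Normc.normc p`_j.

(* Main.v *)
Require Import Defs.
From HB Require Import structures.
From mathcomp Require Import all_boot all_order all_algebra.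
From mathcomp Require Import complex.
From mathcomp Require Import all_classical all_reals.
From mathcomp Require Import trigo.
From mathcomp Require Import ring lra.
Import Order.TTheory GRing.Theory Num.Theory.
Local Open Scope ring_scope.
Section H.
Variable R : realType.
Local Notation nc := (@Normc.normc R).

Lemma nc_ge0 (x : R[i]) : 0 <= nc x.
Proof. by case: x => a b; rewrite /Normc.normc sqrtr_ge0. Qed.

Lemma nc_prod (s : seq R[i]) (F : R[i] -> R[i]) :
  nc (\prod_(w <- s) F w) = \prod_(w <- s) nc (F w).
Proof.
elim: s => [|a s IH]; first by rewrite !big_nil Normc.normc1.
by rewrite !big_cons Normc.normcM IH.
Qed.

Lemma nc_exp (x : R[i]) n : nc (x ^+ n) = nc x ^+ n.
Proof.
elim: n => [|n IH]; first by rewrite !expr0 Normc.normc1.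
by rewrite !exprS Normc.normcM IH.
Qed.

Lemma nc_sub_ge (u v : R[i]) : nc u - nc v <= nc (u + v).
Proof.
have := le_normcD (u + v) (- v); rewrite addrK normcN => H.
by rewrite lerBlDr.
Qed.

Lemma rootbound (q : {poly R[i]}) (z : R[i]) (r : R) : 0 <= r -> q != 0 ->
  (forall w, root q w -> r <= nc (z - w)) ->
  nc (lead_coef q) * r ^+ (size q).-1 <= nc q.[z].
Proof.
move=> r0 q0 Hr; have [rs Hq] := closed_field_poly_normal q.
have lq0 : lead_coef q != 0 by rewrite lead_coef_eq0.
have Hs : size q = (size rs).+1.
  by rewrite {1}Hq size_scale // size_prod_XsubC.
have Hin : forall w, w \in rs -> r <= nc (z - w).
  move=> w wi; apply: Hr; rewrite Hq rootZ // root_prod_XsubC //.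
rewrite Hs /= [in q.[z]]Hq hornerZ horner_prod Normc.normcM.
apply: ler_wpM2l; first exact: nc_ge0.
rewrite nc_prod; elim: rs {Hq Hs} Hin => [|a s IH] Hin; first by rewrite big_nil expr0.
rewrite big_cons /= exprS; apply: ler_pM => //.
- by apply: exprn_ge0.
- by rewrite hornerXsubC; apply: Hin; rewrite inE eqxx.
- by apply: IH => w wi; apply: Hin; rewrite inE wi orbT.
Qed.

Lemma nc_nu d : nc (nu R d) = 1.
Proof. by rewrite /nu /Normc.normc cos2Dsin2 sqrtr1. Qed.

Lemma trunc_S n (p : {poly R[i]}) :
  trunc_poly n.+1 p = trunc_poly n p + p`_n *: 'X^n.
Proof. by rewrite /trunc_poly !poly_def big_ord_recr. Qed.

Variables (r : R) (p : {poly R[i]}) (z : R[i]).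
Hypothesis r0 : 0 < r.
Hypothesis r1 : r <= 1.
Hypothesis z1 : nc z = 1.

Let a n := nc (trunc_poly n p).[z].
Let S n := \sum_(j < n) nc p`_j.
Let f k := r ^+ k / (2 * (r ^+ k + 1)).
Let C n := 4 * \prod_(k < n) f k.

Lemma stepA n : (trunc_poly n.+1 p != 0 ->
   forall w, root (trunc_poly n.+1 p) w -> r <= nc (z - w)) ->
  nc p`_n * r ^+ n <= a n.+1.
Proof.
move=> Hr; have [->|pn0] := eqVneq p`_n 0.
  by rewrite Normc.normc0 mul0r /a nc_ge0.
have tn0 : trunc_poly n.+1 p != 0.
  by rewrite -size_poly_eq0 /trunc_poly size_poly_eq.
have := @rootbound _ z r (ltW r0) tn0 (Hr tn0).
by rewrite /trunc_poly lead_coef_poly // size_poly_eq.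
Qed.

Lemma stepB n : a n - nc p`_n <= a n.+1.
Proof.
rewrite /a trunc_S hornerD hornerZ hornerXn.
have := nc_sub_ge (trunc_poly n p).[z] (p`_n * z ^+ n).
by rewrite Normc.normcM nc_exp z1 expr1n mulr1.
Qed.

Lemma f_ge0 k : 0 <= f k.
Proof. by rewrite /f divr_ge0 ?mulr_ge0 ?addr_ge0 ?exprn_ge0 ?ltW. Qed.

Lemma f_le k : f k <= 1 / (2 * (r ^+ k + 1)).
Proof.
rewrite /f ler_pM2r; first by rewrite exprn_ile1 // ltW.
by rewrite invr_gt0 mulr_gt0 // ltr_wpDl ?exprn_ge0 ?ltW.
Qed.

Lemma alg_step (a' a0 S0 t x C0 : R) : 0 < x -> 0 <= t -> 0 <= S0 -> 0 <= C0 ->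
  C0 <= 1 -> C0 * S0 <= a0 -> x * t <= a' -> a0 - t <= a' ->
  C0 * (x / (2 * (x + 1))) * (S0 + t) <= a'.
Proof.
move=> x0 t0 S00 C00 C01 H1 H2 H3.
have hx : 0 < 2 * (x + 1) by rewrite mulr_gt0 // ltr_wpDl // ltW.
rewrite -(ler_pM2r hx).
have -> : C0 * (x / (2 * (x + 1))) * (S0 + t) * (2 * (x + 1)) = C0 * x * (S0 + t).
  by field; rewrite gt_eqF // addr_gt0.
have a'0 : 0 <= a' by apply: le_trans H2; rewrite mulr_ge0 // ltW.
nra.
Qed.

Lemma f_le1 k : f k <= 1.
Proof.
have h : 0 < 2 * (r ^+ k + 1) by rewrite mulr_gt0 // ltr_wpDl ?exprn_ge0 ?ltW.
rewrite /f ler_pdivrMr // mul1r.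
have := exprn_ge0 k (ltW r0); lra.
Qed.

Lemma CS n : C n.+1 = C n * f n.
Proof. by rewrite /C big_ord_recr mulrA. Qed.

Lemma C1 : C 1 = 1.
Proof. by rewrite /C big_ord1 /f expr0; field. Qed.

Lemma C_bnd n : 0 <= C n.+1 <= 1.
Proof.
elim: n => [|n /andP[IH1 IH2]]; first by rewrite C1 ler01 lexx.
rewrite CS; apply/andP; split; first by rewrite mulr_ge0 ?f_ge0.
by rewrite -[1]mulr1 ler_pM ?f_ge0 ?f_le1.
Qed.

Variable d : nat.
Hypothesis Hroot : forall n, (n < d)%N -> trunc_poly n.+1 p != 0 ->
   forall w, root (trunc_poly n.+1 p) w -> r <= nc (z - w).

Lemma main_ind n : (n < d)%N -> C n.+1 * S n.+1 <= a n.+1.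
Proof.
elim: n => [|n IH] nd.
  rewrite C1 mul1r /S big_ord1.
  by have := @stepA 0 (@Hroot 0 nd); rewrite expr0 mulr1.
have nd' : (n < d)%N by apply: ltn_trans nd.
rewrite CS /S big_ord_recr /=.
have /andP[c0 c1] := C_bnd n.
apply: (@alg_step _ (a n.+1)) => //.
- by rewrite exprn_gt0.
- exact: nc_ge0.
- by rewrite sumr_ge0 // => i _; apply: nc_ge0.
- exact: IH nd'.
- by rewrite mulrC; apply: (@stepA n.+1 (@Hroot n.+1 nd)).
- exact: stepB.
Qed.

End H.

Lemma trunc_full (R : realType) (d : nat) (p : {poly R[i]}) :
  (size p <= d)%N -> trunc_poly d p = p.
Proof.
move=> sp; apply/polyP => k; rewrite /trunc_poly coef_poly.
case: ltnP => // kd; rewrite nth_default //; exact: leq_trans sp kd.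
Qed.

Lemma coef_bound (R : realType) (d : nat) (r : R) : (2 <= d)%N -> 0 < r ->
  (r ^+ ((d - 1) * d %/ 2) * ((d%:R - 1) / (2 * d%:R)) ^+ d * (2 / (d%:R - 1)))
      / (\prod_(k < d) (r ^+ k + 1))
  <= 4 * \prod_(k < d) (r ^+ k / (2 * (r ^+ k + 1))).
Proof.
move=> d2 r0.
have Pe : \prod_(k < d) r ^+ k = r ^+ ((d - 1) * d %/ 2).
  rewrite prodrXr -(big_mkord xpredT (fun k => k)) bin2_sum bin2 divn2.
  by rewrite subn1 mulnC.
rewrite prodf_div Pe big_split /= prodr_const card_ord.
set E := r ^+ _; set P := \prod_(k < d) _.
have E0 : 0 <= E by rewrite exprn_ge0 // ltW.
have P0 : 0 < P by rewrite prodr_gt0 // => k _; rewrite ltr_wpDl ?exprn_ge0 ?ltW.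
have d1 : (1 : R) <= d%:R - 1.
  by rewrite lerBrDr -(natrD _ 1 1) ler_nat.
have dpos : (0 : R) < d%:R by rewrite ltr0n; apply: leq_trans d2.
set X := (d%:R - 1) / (2 * d%:R).
have X0 : 0 <= X by rewrite divr_ge0 ?mulr_ge0 ?ler0n //; lra.
have X1 : X <= 2^-1.
  rewrite /X ler_pdivrMr ?mulr_gt0 //; lra.
have HX : X ^+ d <= (2^-1) ^+ d by apply: lerXn2r => //; rewrite nnegrE // invr_ge0; lra.
have Y0 : 0 <= (2:R) / (d%:R - 1) by apply: divr_ge0; lra.
have Y1 : (2:R) / (d%:R - 1) <= 2 by rewrite ler_pdivrMr; nra.
have H2 : X ^+ d * ((2:R) / (d%:R - 1)) <= 4 * (2^-1) ^+ d.
  have h := exprn_ge0 d X0.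
  have h2 : 0 <= (2^-1 : R) ^+ d by rewrite exprn_ge0 // invr_ge0; lra.
  nra.
move: H2; set Y := (2:R) / _ => H2.
have -> : E * X ^+ d * Y / P = (E / P) * (X ^+ d * Y) by ring.
have -> : 4 * (E / (2 ^+ d * P)) = (E / P) * (4 * (2^-1) ^+ d).
  by rewrite exprVn invfM; ring.
by apply: ler_wpM2l => //; apply: divr_ge0 => //; apply: ltW.
Qed.

Theorem mainTheorem8 (R : realType) (d : nat) (r : R) (p : {poly R[i]}) (z0 : R[i]) :
  (2 <= d)%N -> 0 < r -> r <= 1 ->
  (size p <= d)%N ->
  Normc.normc z0 = 1 ->
  (forall (j n : nat) (w : R[i]), (1 <= j <= d)%N -> (1 <= n <= d)%N ->
     trunc_poly n p != 0 -> root (trunc_poly n p) w ->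
     r <= Normc.normc (nu R d ^+ j * z0 - w)) ->
  forall j : nat, (1 <= j <= d)%N ->
    (r ^+ ((d - 1) * d %/ 2) * ((d%:R - 1) / (2 * d%:R)) ^+ d * (2 / (d%:R - 1)))
      / (\prod_(k < d) (r ^+ k + 1)) * l1coef d p
    <= Normc.normc (p.[nu R d ^+ j * z0]).
Proof.
move=> d2 r0 r1 sp nz0 H j jd.
set z := nu R d ^+ j * z0.
have z1 : Normc.normc z = 1 by rewrite /z Normc.normcM nc_exp nc_nu expr1n mul1r.
have Hroot : forall n, (n < d)%N -> trunc_poly n.+1 p != 0 ->
   forall w, root (trunc_poly n.+1 p) w -> r <= Normc.normc (z - w).
  by move=> n nd t0 w rw; apply: (H j n.+1)...
have d0 : (d.-1 < d)%N by rewrite prednK // ltnW.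
have := @main_ind R r p z r0 z1 d Hroot d.-1 d0.
rewrite prednK ?(ltnW d2) // trunc_full // => Hm.
apply: le_trans Hm; rewrite /l1coef.
apply: ler_wpM2r; first by rewrite sumr_ge0 // => i _; apply: nc_ge0.
exact: coef_bound.
Qed.
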